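(* Let $X$ be a fragment of $\mathrm{FO}(\lambda)$ that contains all sentences (i.e. $\mathrm{FO}_0(\lambda)\subseteq X$) and the formula $(x_1=x_2)$. Then every modeling $X$-limit of a sequence of weakly uniform $\lambda$-modelings is weakly uniform.
   Context: For a $\lambda$-structure $\mathbf A$ with domain $A$ and a first-order formula $\phi$ with free variables among $x_1,\dots,x_p$, $\Omega_\phi(\mathbf A)=\{(v_1,\dots,v_p)\in A^p:\mathbf A\models\phi(v_1,\dots,v_p)\}$. A relational sample space is a $\lambda$-structure whose domain is a standard Borel space in which every $\Omega_\phi(\mathbf A)$ is measurable in the product $\sigma$-algebra; a $\lambda$-modeling is a relational sample space with a probability measure $\nu_{\mathbf A}$, and $\langle\phi,\mathbf A\rangle=\nu_{\mathbf A}^p(\Omega_\phi(\mathbf A))$ (a finite structure is a modeling with the discrete $\sigma$-algebra and uniform measure). A sequence $(\mathbf A_n)$ of modelings is $X$-convergent if $\langle\phi,\mathbf A_n\rangle$ converges for each $\phi\in X$, and a modeling $\mathbf L$ is a modeling $X$-limit of it if $\langle\phi,\mathbf L\rangle=\lim_n\langle\phi,\mathbf A_n\rangle$ for all $\phi\in X$. A modeling is weakly uniform if all singletons of its domain have the same measure. *)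

(* Defs.v *)
From HB Require Import structures.
From mathcomp Require Import all_boot all_order all_algebra.
From mathcomp Require Import all_classical all_reals all_analysis.
Set Implicit Arguments. Unset Strict Implicit. Unset Printing Implicit Defensive.
Import Order.TTheory GRing.Theory Num.Theory.
Local Open Scope classical_set_scope.
Local Open Scope ring_scope.

Record signature := Signature { sym : Type ; ar : sym -> nat }.

(* First-order formulas FO(lambda); variable x_{i+1} is represented by index i. *)
Inductive formula (L : signature) : Type :=
  | FEq : nat -> nat -> formula L
  | FRel : forall s : sym L, (ar s).-tuple nat -> formula L
  | FNeg : formula L -> formula L
  | FAnd : formula L -> formula L -> formula L
  | FEx : nat -> formula L -> formula L.

Arguments FEq {L}.

Fixpoint fv (L : signature) (phi : formula L) : seq nat :=
  match phi with
  | FEq i j => [:: i; j]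
  | FRel _ a => val a
  | FNeg f => fv f
  | FAnd f g => fv f ++ fv g
  | FEx i f => [seq j <- fv f | j != i]
  end.

Definition free_among (L : signature) (phi : formula L) (p : nat) : Prop :=
  all (fun i => i < p)%N (fv phi).

Definition sentence (L : signature) (phi : formula L) : Prop := fv phi = [::].

Definition fvb (L : signature) (phi : formula L) : nat :=
  foldr maxn 0%N [seq i.+1 | i <- fv phi].

Definition upd (T : Type) (v : nat -> T) (i : nat) (x : T) : nat -> T :=
  fun j => if j == i then x else v j.

Fixpoint sat (L : signature) (T : Type) (rel : forall s : sym L, (ar s).-tuple T -> Prop)
    (v : nat -> T) (phi : formula L) : Prop :=
  match phi with
  | FEq i j => v i = v j
  | FRel s a => rel s (map_tuple v a)
  | FNeg f => ~ sat rel v f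
  | FAnd f g => sat rel v f /\ sat rel v g
  | FEx i f => exists x : T, sat rel (upd v i x) f
  end.

(* Omega_phi(A) as a subset of A^p (p-tuples); the default value used for
   indices >= p is irrelevant when phi has its free variables among x_1..x_p. *)
Definition Omega (L : signature) (T : pointedType)
    (rel : forall s : sym L, (ar s).-tuple T -> Prop) (phi : formula L) (p : nat)
    : set (p.-tuple T) :=
  [set t | sat rel (fun i => nth point (val t) i) phi].
Arguments Omega {L T} rel phi p.

(* Standard Borel space: Borel-isomorphic to a Borel subset of the reals. *)
Definition standard_borel (R : realType) d (T : measurableType d) : Prop :=
  exists f : T -> R,
    [/\ injective f, measurable_fun setT f, measurable (range f)
      & forall A : set T, measurable A -> measurable (f @` A)].

(* p-fold product measure nu^p on p-tuples, defined by iterated integration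
   (the standard construction of the product measure). *)
Fixpoint prodm (R : realType) d (T : measurableType d) (nu : probability T R) (p : nat)
    : set (p.-tuple T) -> \bar R :=
  match p return set (p.-tuple T) -> \bar R with
  | 0%N => fun S => if `[< S [tuple] >] then 1%E else 0%E
  | q.+1 => fun S => (\int[nu]_x prodm nu (fun t : q.-tuple T => S (cons_tuple x t)))%E
  end.
Arguments prodm {R d T} nu p.

Record modeling (L : signature) (R : realType) := Modeling {
  m_disp : measure_display ;
  m_dom : measurableType m_disp ;
  m_rel : forall s : sym L, (ar s).-tuple m_dom -> Prop ;
  m_std : standard_borel R m_dom ;
  m_meas : forall (phi : formula L) (p : nat), free_among phi p ->
      measurable (Omega m_rel phi p) ;
  m_prob : probability m_dom R }.

(* <phi, A> = nu_A^p (Omega_phi(A)) with p the least admissible arity. *)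
Definition stone (L : signature) (R : realType) (phi : formula L) (A : modeling L R)
    : \bar R :=
  prodm (m_prob A) (fvb phi) (Omega (@m_rel L R A) phi (fvb phi)).

Definition weakly_uniform (L : signature) (R : realType) (A : modeling L R) : Prop :=
  forall x y : m_dom A, m_prob A [set x] = m_prob A [set y].

Definition modeling_limit (L : signature) (R : realType) (X : formula L -> Prop)
    (As : nat -> modeling L R) (Lim : modeling L R) : Prop :=
  forall phi, X phi -> (stone phi (As n) @[n --> \oo] --> stone phi Lim).

(* Main.v *)
Require Import Defs.
From HB Require Import structures.
From mathcomp Require Import all_boot all_order all_algebra.
From mathcomp Require Import all_classical all_reals all_analysis.
From mathcomp Require Import measurable_realfun.
From mathcomp Require Import ring lra.
Set Implicit Arguments. Unset Strict Implicit. Unset Printing Implicit Defensive.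
Import Order.TTheory GRing.Theory Num.Theory.
Local Open Scope classical_set_scope.
Local Open Scope ring_scope.

Section Formulas.
Variable L : signature.

Definition ftop : formula L := FEx 0 (FEq 0%N 0%N).
Fixpoint neqs (j k : nat) : formula L :=
  match j with
  | 0 => ftop
  | j'.+1 => FAnd (neqs j' k) (FNeg (FEq j' k))
  end.
Fixpoint dist (k : nat) : formula L :=
  match k with
  | 0 => ftop
  | k'.+1 => FAnd (dist k') (neqs k' k')
  end.
Fixpoint exs (l : seq nat) (f : formula L) : formula L :=
  match l with
  | [::] => f
  | i :: l' => FEx i (exs l' f)
  end.
Definition atleast k := exs (iota 0 k) (dist k).

Lemma fv_neqs j k : (j <= k)%N -> all (fun i => i < k.+1)%N (fv (neqs j k)).
Proof.
elim: j => [|j IH] //= Hj; rewrite all_cat IH ?(ltnW Hj) //=.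
by rewrite andbT !ltnS (ltnW Hj) leqnn.
Qed.

Lemma fv_dist k : all (fun i => i < k)%N (fv (dist k)).
Proof.
elim: k => [|k IH] //=; rewrite all_cat; apply/andP; split.
  by apply: sub_all IH => i /= /ltnW.
exact: fv_neqs.
Qed.

Lemma fv_exs l f : fv (exs l f) = [seq j <- fv f | j \notin l].
Proof.
elim: l => [|i l IH] /=; first by rewrite filter_predT.
rewrite IH -filter_predI; apply: eq_filter => j /=.
by rewrite in_cons negb_or andbC.
Qed.

Lemma sentence_atleast k : sentence (atleast k).
Proof.
rewrite /sentence /atleast fv_exs.
have := fv_dist k; elim: (fv (dist k)) => //= a s IH /andP[ha hs].
by rewrite mem_iota /= add0n ha /= IH.
Qed.

Variable T : Type.
Variable rel : forall s : sym L, (ar s).-tuple T -> Prop.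

Lemma sat_ext v w f : v =1 w -> (sat rel v f <-> sat rel w f).
Proof. by move=> /funext ->. Qed.

Lemma sat_eqv v w f : sat rel v f -> v =1 w -> sat rel w f.
Proof. by move=> h /funext <-. Qed.

Lemma sat_exs l f v :
  sat rel v (exs l f) <-> exists w, sat rel (fun j => if j \in l then w j else v j) f.
Proof.
elim: l v => [|i l IH] v /=.
  split; first by move=> h; exists v.
  by case=> w; rewrite (_ : (fun j => _) = v).
split.
  case=> x /IH [w hw]; exists (fun j => if j \in l then w j else x).
  apply: (sat_eqv hw) => j; rewrite in_cons /upd.
  by case: (j \in l); case: eqP => //= ->.
case=> w hw; exists (w i); apply/IH; exists w.
apply: (sat_eqv hw) => j; rewrite in_cons /upd.
by case: (j \in l); case: eqP => //= ->.
Qed.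

Lemma sat_top v : (exists x : T, True) -> sat rel v ftop.
Proof. by case=> x _; exists x. Qed.

Hypothesis Tne : exists x : T, True.

Lemma sat_neqs v j k : sat rel v (neqs j k) <-> forall i, (i < j)%N -> v i <> v k.
Proof.
elim: j => [|j IH] /=.
  by split=> // _; apply: sat_top.
rewrite IH; split.
  case=> h1 h2 i; rewrite ltnS leq_eqVlt => /orP[/eqP->//|]; exact: h1.
by move=> h; split; [move=> i hi; apply: h; rewrite ltnS ltnW | apply: h].
Qed.

Lemma sat_dist v k : sat rel v (dist k) <->
  forall i j, (i < j)%N -> (j < k)%N -> v i <> v j.
Proof.
elim: k => [|k IH] /=.
  by split=> // _; apply: sat_top.
rewrite IH sat_neqs; split.
  case=> h1 h2 i j hij; rewrite ltnS leq_eqVlt => /orP[/eqP hjk|]; first by subst j; exact: h2.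
  exact: h1.
move=> h; split; first by move=> i j hij hj; apply: h => //; apply: ltnW.
by move=> i hi; apply: h.
Qed.
End Formulas.
Arguments atleast {L}.
Arguments dist {L}.
Arguments neqs {L}.
Arguments ftop {L}.


Definition Pk (T : eqType) k := exists s : seq T, uniq s /\ size s = k.

Lemma sat_atleast L (T : pointedType) (rel : forall s : sym L, (ar s).-tuple T -> Prop) v k :
  sat rel v (atleast k) <-> Pk T k.
Proof.
have Tne : exists _ : T, True by exists point.
rewrite /atleast sat_exs; split.
  case=> w /(@sat_dist L T rel Tne _ _) h; exists [seq w i | i <- iota 0 k]; rewrite size_map size_iota; split=> //.
  rewrite map_inj_in_uniq ?iota_uniq // => i j; rewrite !mem_iota /= !add0n => hi hj hij.
  apply/eqP; case: (ltngtP i j) => // Hij.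
    by have := h i j Hij hj; rewrite !mem_iota /= !add0n hi hj.
  by have := h j i Hij hi; rewrite !mem_iota /= !add0n hi hj; move/(_ (esym hij)).
case=> s [us ss]; exists (fun i => nth point s i); apply/(@sat_dist L T rel Tne _ _) => i j hij hj.
rewrite !mem_iota /= !add0n hj (ltn_trans hij hj) => /eqP.
rewrite nth_uniq ?ss ?(ltn_trans hij hj) // => /eqP e.
by move: hij; rewrite e ltnn.
Qed.

Section Stone.
Variables (L : signature) (R : realType).
Local Open Scope ereal_scope.

Lemma stone_sentence (A : modeling L R) phi : sentence phi ->
  stone phi A = (if `[< sat (@m_rel L R A) (fun i => nth point [::] i) phi >] then 1 else 0).
Proof.
move=> H; rewrite /stone /fvb H /=.
done.
Qed.

Lemma meas_set1 (A : modeling L R) (x : m_dom A) : measurable [set x].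
Proof.
case: (m_std A) => f [finj mf _ _].
have := mf measurableT [set f x] (measurable_set1 (f x)).
rewrite setTI; congr measurable; apply/seteqP; split => y /=.
  exact: finj.
by move=> ->.
Qed.

Lemma stone_diag (A : modeling L R) :
  stone (FEq 0%N 1%N) A = \int[m_prob A]_x (m_prob A [set x]).
Proof.
rewrite /stone /=.
apply: eq_integral => x _.
have -> : m_prob A [set x] = m_prob A ([set x] `&` setT) by rewrite setIT.
rewrite -integral_indic //; last exact: meas_set1.
apply: eq_integral => y _ /=.
rewrite /Omega /= indicE.
case: (asboolP (x = y)) => [->|nxy].
  by rewrite mem_set.
by rewrite memNset //= => e; apply: nxy.
Qed.
End Stone.

Section Meas.
Local Open Scope ereal_scope.
Variables (d : measure_display) (T : measurableType d) (R : realType).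
Variable nu : probability T R.
Hypothesis hs : forall x : T, measurable [set x].

Lemma setseq_cons (x : T) s : [set y | y \in x :: s] = [set x] `|` [set y | y \in s].
Proof.
apply/seteqP; split => y /=.
  by rewrite in_cons => /orP[/eqP->|ys]; [left|right].
by case=> [->|ys]; rewrite in_cons ?eqxx ?ys ?orbT.
Qed.

Lemma meas_seq (s : seq T) : measurable [set y : T | y \in s].
Proof.
elim: s => [|x s IH]; first by rewrite (_ : [set y : T | y \in [::]] = set0) //; apply/seteqP; split.
by rewrite setseq_cons; apply: measurableU.
Qed.

Lemma mu_seq_le (s : seq T) : nu [set y | y \in s] <= \sum_(x <- s) nu [set x].
Proof.
elim: s => [|x s IH].
  by rewrite big_nil (_ : [set y : T | y \in [::]] = set0) ?measure0 //; apply/seteqP; split.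
rewrite setseq_cons big_cons; apply: le_trans (measureU2 _ (hs x) (meas_seq s)) _.
exact: leeD.
Qed.

Lemma mu_seq_eq (s : seq T) : uniq s -> nu [set y | y \in s] = \sum_(x <- s) nu [set x].
Proof.
elim: s => [|x s IH].
  by rewrite big_nil (_ : [set y : T | y \in [::]] = set0) ?measure0 //; apply/seteqP; split.
move=> /= /andP[xs us]; rewrite setseq_cons big_cons measureU ?IH //; last 2 first.
  exact: meas_seq.
  by apply/seteqP; split => y //= [-> ys]; move: xs; rewrite ys.
by congr (_ + _); apply: IH.
Qed.

Lemma le_int_any (f g : T -> \bar R) : (forall x, 0 <= f x) -> (forall x, f x <= g x) ->
  \int[nu]_x f x <= \int[nu]_x g x.
Proof.
move=> f0 fg; have g0 x : 0 <= g x by apply: le_trans (fg x).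
rewrite !ge0_integralTE //.
apply: ge_ereal_sup => _ [h hf <-]; apply: ereal_sup_ubound; exists h => // x.
exact: le_trans (hf x) (fg x).
Qed.

Lemma sum_indic (s : seq T) y : uniq s ->
  \sum_(x <- s) (nu [set x] * (\1_[set x] y)%:E) = if y \in s then nu [set y] else 0.
Proof.
elim: s => [|x s IH] /=; first by rewrite big_nil.
move=> /andP[xs us]; rewrite big_cons IH // in_cons indicE.
case: (eqVneq y x) => [->|nyx] /=.
  by rewrite mem_set // (negbTE xs) mule1 adde0.
by rewrite memNset ?mule0 ?add0e // => e; move: nyx; rewrite e eqxx.
Qed.

Lemma int_lb (s : seq T) : uniq s ->
  \sum_(x <- s) (nu [set x] * nu [set x]) <= \int[nu]_y nu [set y].
Proof.
move=> us.
have mI (x : T) : measurable_fun setT (fun y : T => ((\1_[set x] y)%:E : \bar R)).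
  by apply/measurable_realfun.measurable_EFinP; apply: measurable_realfun.measurable_indic.
have mF (x : T) : measurable_fun setT (fun y => nu [set x] * (\1_[set x] y)%:E).
  by apply: measurable_funeM.
have F0 (x y : T) : 0 <= nu [set x] * (\1_[set x] y)%:E.
  by apply: mule_ge0 => //; rewrite lee_fin.
apply: le_trans (le_int_any (f := fun y => \sum_(x <- s) (nu [set x] * (\1_[set x] y)%:E)) _ _).
- rewrite ge0_integral_sum //; apply: lee_sum => x _; rewrite ge0_integralZl //.
  + by rewrite integral_indic // setIT.
- by move=> y; apply: sume_ge0 => x _; exact: F0.
- by move=> y; rewrite sum_indic //; case: ifP.
Qed.
End Meas.

Lemma grow (T : eqType) n : Pk T n \/ exists s : seq T, [/\ uniq s, (size s < n)%N & forall y, y \in s].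
Proof.
elim: n => [|n [[s [us ss]]|[s [us ss cs]]]].
- by left; exists [::].
- have [[y ys]|H] := pselect (exists y, y \notin s).
    by left; exists (y :: s); rewrite /= ys us ss.
  right; exists s; split=> //; first by rewrite ss.
  by move=> y; apply/negPn/negP => ys; apply: H; exists y.
- by right; exists s; split=> //; apply: ltnW.
Qed.

Lemma sum_const_seq (T : Type) (R : ringType) (s : seq T) (c : R) :
  \sum_(x <- s) c = (size s)%:R * c.
Proof. by elim: s => [|x s IH]; rewrite ?big_nil ?mul0r // big_cons IH /= mulrSr mulrDl mul1r addrC. Qed.

Lemma cs_lemma (T : eqType) (R : realFieldType) (s : seq T) (a : T -> R) :
  uniq s -> (0 < size s)%N -> \sum_(x <- s) a x ^+ 2 <= (size s)%:R^-1 ->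
  1 <= \sum_(x <- s) a x -> forall x, x \in s -> a x = (size s)%:R^-1.
Proof.
move=> us sp h2 h1 x xs.
set N := (size s)%:R : R.
have N0 : N != 0 by rewrite pnatr_eq0 -lt0n.
have E : \sum_(y <- s) (a y - N^-1) ^+ 2 =
   \sum_(y <- s) a y ^+ 2 - 2 * N^-1 * \sum_(y <- s) a y + N^-1.
  rewrite (eq_bigr (fun y => a y ^+ 2 - 2 * N^-1 * a y + N^-1 ^+ 2)); last first.
    by move=> y _; ring.
  rewrite big_split sumrB /= sum_const_seq -mulr_sumr -/N.
  by rewrite expr2 mulrA mulfV ?mul1r.
have Hle' : \sum_(y <- s) (a y - N^-1) ^+ 2 <= N^-1 - 2 * N^-1 + N^-1.
  rewrite E; have : 2 * N^-1 * 1 <= 2 * N^-1 * \sum_(y <- s) a y.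
    by rewrite ler_pM2l // mulr_gt0 // invr_gt0 ltr0n.
  rewrite mulr1 => h3.
  by rewrite lerD2r; apply: lerB.
have e0 : N^-1 - 2 * N^-1 + N^-1 = 0 by ring.
have Hle : \sum_(y <- s) (a y - N^-1) ^+ 2 <= 0 by move: Hle'; rewrite e0.
have Hx : (a x - N^-1) ^+ 2 <= 0.
  apply: le_trans Hle; rewrite (bigD1_seq x) //= lerDl.
  by apply: sumr_ge0 => y _; apply: sqr_ge0.
have : (a x - N^-1) ^+ 2 = 0 by apply/eqP; rewrite eq_le Hx sqr_ge0.
by move/eqP; rewrite sqrf_eq0 subr_eq0 => /eqP.
Qed.

Lemma cvg01 (R : realType) (u : nat -> Prop) (b : Prop) :
  (fun n => (if `[< u n >] then 1%E else 0%E : \bar R)) @ \oo --> (if `[< b >] then 1%E else 0%E : \bar R) ->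
  \forall n \near \oo, (u n <-> b).
Proof.
have E (P : Prop) : (if `[< P >] then 1%E else 0%E : \bar R) = (if `[< P >] then 1%R else 0%R)%:E.
  by case: ifP.
rewrite E (_ : (fun n => _) = (fun n => (if `[< u n >] then 1%R else 0%R)%:E)); last first.
  by apply: funext => n; exact: E.
move/fine_cvgP => [_ /cvgrPdist_lt h].
have h2 : (0 : R) < 1 / 2 by rewrite divr_gt0.
apply: filterS (h _ h2) => n /=.
case: (asboolP (u n)) => un; case: (asboolP b) => hb //=.
- by rewrite ?subr0 ?sub0r ?normrN normr1; lra.
- by rewrite ?subr0 ?sub0r ?normrN normr1; lra.
Qed.

Section Mod.
Variables (L : signature) (R : realType) (A : modeling L R).
Local Notation nu := (m_prob A).
Local Notation T := (m_dom A).
Definition aa (x : T) : R := fine (nu [set x]).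

Lemma aa_ge0 x : 0 <= aa x.
Proof. by rewrite /aa fine_ge0. Qed.

Lemma nu_fin x : nu [set x] = (aa x)%:E.
Proof.
rewrite /aa fineK // ge0_fin_numE ?measure_ge0 //.
by rewrite (le_lt_trans (probability_le1 _ (meas_set1 x))) // ltey.
Qed.

Lemma sum_fine (s : seq T) : (\sum_(x <- s) nu [set x])%E = (\sum_(x <- s) aa x)%:E.
Proof. by rewrite (eq_bigr _ (fun x _ => nu_fin x)) sumEFin. Qed.

Lemma R1 (s : seq T) : uniq s -> \sum_(x <- s) aa x <= 1.
Proof.
move=> us; rewrite -lee_fin -sum_fine -mu_seq_eq //; last exact: meas_set1.
exact/probability_le1/meas_seq/meas_set1.
Qed.

Lemma R2 (s : seq T) : (forall y, y \in s) -> 1 <= \sum_(x <- s) aa x.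
Proof.
move=> cs; rewrite -lee_fin -sum_fine.
apply: le_trans (mu_seq_le _ _ _); last exact: meas_set1.
rewrite (_ : [set y | y \in s] = setT) ?probability_setT //.
by apply/seteqP; split => y // _; exact: cs.
Qed.

Lemma R3 (s : seq T) : uniq s ->
  ((\sum_(x <- s) aa x ^+ 2)%:E <= stone (FEq 0%N 1%N) A)%E.
Proof.
move=> us; rewrite stone_diag; apply: le_trans (int_lb _ _ us); last exact: meas_set1.
rewrite -sumEFin; apply: lee_sum => x _; rewrite nu_fin expr2.
by [].
Qed.

Lemma WU_aa : weakly_uniform A -> forall x, aa x = aa point.
Proof. by move=> wu x; rewrite /aa (wu x point). Qed.

Lemma WU_stone : weakly_uniform A -> stone (FEq 0%N 1%N) A = (aa point)%:E.
Proof.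
move=> wu; rewrite stone_diag.
rewrite (eq_integral (cst (aa point)%:E)); last by move=> x _; rewrite nu_fin WU_aa.
rewrite (@integral_cst _ _ _ nu setT measurableT).
transitivity ((aa point)%:E * 1)%E; last exact: mule1.
congr (_ * _)%E; exact: probability_setT.
Qed.

Lemma WU_Pk k : weakly_uniform A -> Pk T k -> k%:R * aa point <= 1.
Proof.
move=> wu [s [us <-]]; apply: le_trans (R1 us).
by rewrite -sum_const_seq le_eqVlt; apply/orP; left; apply/eqP; apply: eq_bigr => x _; rewrite WU_aa.
Qed.

Lemma WU_notPk N : weakly_uniform A -> ~ Pk T N.+1 -> 1 <= N%:R * aa point.
Proof.
move=> wu nP; have [//|[s [us ss cs]]] := grow T N.+1.
apply: le_trans (R2 cs) _.
rewrite (eq_bigr (fun _ => aa point)); last by move=> x _; rewrite WU_aa.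
rewrite sum_const_seq ler_wpM2r ?aa_ge0 // ler_nat -ltnS //.
Qed.
End Mod.

Lemma small_le0 (R : realType) (e : R) : (forall k : nat, e <= (k.+1%:R)^-1) -> e <= 0.
Proof.
move=> h; rewrite leNgt; apply/negP => e0.
have hb := archi_boundP (ltW (eq_ind_r (fun b => is_true b) e0 (invr_gt0 e))).
move: hb.
set k := Num.Def.archi_bound _ => hb.
have := h k; rewrite -div1r ler_pdivlMr ?ltr0n // => h1.
have ee : e * e^-1 = 1 by rewrite mulfV // gt_eqF.
move: h1 hb ee; rewrite -natr1; move: (k%:R : R) (e^-1) => K F.
nra.
Qed.

Lemma stone_atleast L R (A : modeling L R) k :
  stone (atleast k) A = (if `[< Pk (m_dom A) k >] then 1%E else 0%E).
Proof.
rewrite stone_sentence; last exact: sentence_atleast.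
by rewrite (propext (sat_atleast _ _ _)).
Qed.

Unset Implicit Arguments.
Theorem lemma8p2 (L : signature) (R : realType) (X : formula L -> Prop)
  (HX0 : forall phi : formula L, sentence phi -> X phi)
  (HXeq : X (FEq 0%N 1%N))
  (As : nat -> modeling L R) (Lim : modeling L R) :
  (forall n, weakly_uniform (As n)) ->
  modeling_limit X As Lim ->
  weakly_uniform Lim.
Proof.
move=> wu hlim.
set D := stone (FEq 0%N 1%N) Lim.
have cD : (fun n => (@aa _ _ (As n) point)%:E) @ \oo --> D.
  have := hlim _ HXeq.
  by rewrite (_ : (fun n => stone _ (As n)) = (fun n => (@aa _ _ (As n) point)%:E)) //; apply: funext => n; exact: WU_stone (wu n).
have DL : lim ((fun n => (@aa _ _ (As n) point)%:E) @ \oo) = D by apply: cvg_lim.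
have ev k : \forall n \near \oo, (Pk (m_dom (As n)) k <-> Pk (m_dom Lim) k).
  apply: (@cvg01 R); have := hlim _ (HX0 _ (@sentence_atleast L k)).
  rewrite stone_atleast (_ : (fun n => stone _ (As n)) = (fun n => (if `[< Pk (m_dom (As n)) k >] then 1%E else 0%E))).
    by [].
  by apply: funext => n; rewrite stone_atleast.
have [[k nk]|H] := pselect (exists k, ~ Pk (m_dom Lim) k).
  have [Pkk|[s [us ssk cs]]] := grow (m_dom Lim) k; first by exfalso.
  have N0 : (0 < size s)%N by move: (cs point); case: (s).
  have PN : Pk (m_dom Lim) (size s) by exists s.
  have nPN : ~ Pk (m_dom Lim) (size s).+1.
    by case=> s' [us' ss']; have := uniq_leq_size us' (fun y _ => cs y); rewrite ss' ltnn.
  have evc : \forall n \near \oo, @aa _ _ (As n) point = (size s)%:R^-1.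
    apply: filterS2 (ev (size s)) (ev (size s).+1) => n h1 h2.
    have a1 := WU_Pk (wu n) (h1.2 PN).
    have a2 := WU_notPk (wu n) (fun p => nPN (h2.1 p)).
    have e : (size s)%:R * @aa _ _ (As n) point = 1 by apply/eqP; rewrite eq_le a1 a2.
    have nz : (size s)%:R != 0 :> R by rewrite pnatr_eq0 -lt0n.
    by apply: (mulfI nz); rewrite e mulfV.
  have DN : D = ((size s)%:R^-1)%:E.
    rewrite -DL; apply/eqP; rewrite eq_le; apply/andP; split.
    - by apply: lime_le; [apply/cvg_ex; exists D | apply: filterS evc => n ->].
    - by apply: lime_ge; [apply/cvg_ex; exists D | apply: filterS evc => n ->].
  have h2 : \sum_(x <- s) aa x ^+ 2 <= (size s)%:R^-1 by rewrite -lee_fin -DN; exact: R3.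
  have h1 := R2 cs.
  have hx := cs_lemma us N0 h2 h1.
  by move=> x y; rewrite !nu_fin hx ?cs // hx ?cs.
have allP k : Pk (m_dom Lim) k by apply: contrapT => nk; apply: H; exists k.
have Dle k : (D <= ((k.+1)%:R^-1)%:E)%E.
  rewrite -DL; apply: lime_le; first by apply/cvg_ex; exists D.
  apply: filterS (ev k.+1) => n hn.
  rewrite lee_fin; have := WU_Pk (wu n) (hn.2 (allP _)).
  by rewrite -div1r ler_pdivlMr ?ltr0n // mulrC.
have z x : @aa _ _ Lim x = 0.
  have hx : aa x ^+ 2 <= 0.
    apply: small_le0 => k; rewrite -lee_fin; apply: le_trans (Dle k).
    by have := R3 (s := [:: x]) isT; rewrite big_seq1.
  by apply/eqP; rewrite -sqrf_eq0 eq_le hx sqr_ge0.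
by move=> x y; rewrite !nu_fin !z.
Qed.
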